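(* Consider the time-invariant noiseless affine system $x(t+1)=Ax(t)+Bu(t)+s$ with $(A,B)$ controllable, and a collected trajectory $\tilde x(0:L-1)$, $\tilde u(0:L-1)$ of this system with $\tilde u$ persistently exciting of order $n+(T+1)+1$. Consider the problem $$\min_{\mathbf{x},\mathbf{u},G,\hat g} J(\mathbf{x},\mathbf{u})\quad\text{s.t.}\quad \begin{bmatrix}\mathbf{x}\\ \mathbf{u}\end{bmatrix}=\begin{bmatrix} H_{T+1}(\tilde x)\\ H_{T+1}(\tilde u)\end{bmatrix}\begin{bmatrix} G-\hat g\mathbf{1}_n^\top & \hat g\end{bmatrix}\begin{bmatrix} x_0\\ 1\end{bmatrix},\ \ G\in\Gamma(\tilde x),\ \hat g\in\Lambda(\tilde x),$$ $$\mathcal{H}_x\mathbf{x}+\mathcal{H}_u\mathbf{u}\le\mathbf{h},\quad x_0=x(0),\quad x_T\in\mathcal{X}_T.\qquad (\mathrm{P}_3)$$ Then a sequence $(x^*_{0:T},u^*_{0:T})$ is an optimal solution (in its $(\mathbf{x},\mathbf{u})$ components) of $(\mathrm{P}_3)$ if and only if it is an optimal solution of the MPC problem $$\min_{u_{0:T},x_{0:T}} J(u_{0:T},x_{0:T})\ \text{s.t.}\ x_{t+1}=Ax_t+Bu_t+s,\ H_xx_t+H_uu_t\le h\ (t\in[0,T]),\ x_0=x(0),\ x_T\in\mathcal{X}_T.$$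
   Context: Cost $J(u_{0:T},x_{0:T})=\|Px_T\|_p+\sum_{t=0}^{T-1}(\|Qx_t\|_p+\|Ru_t\|_p)$, $p\in\{1,2,\infty\}$; for $p=2$, $Q=Q^\top\succeq0$, $R=R^\top\succ0$, $P=P^\top\succeq0$; for $p\in\{1,\infty\}$, $Q,P,R$ full rank. $H_x\in\mathbb{R}^{d\times n}$, $H_u\in\mathbb{R}^{d\times m}$, $h\in\mathbb{R}^d$; $\mathcal{X}_T$ polyhedral; $\mathcal{H}_x=\mathrm{diag}(H_x,\dots,H_x)$, $\mathcal{H}_u=\mathrm{diag}(H_u,\dots,H_u)$ ($T+1$ copies), $\mathbf{h}=[h^\top,\dots,h^\top]^\top$; $\mathbf{x}=[x_0^\top,\dots,x_T^\top]^\top$, $\mathbf{u}=[u_0^\top,\dots,u_T^\top]^\top$. For a signal $\sigma(0:N-1)$ with values in $\mathbb{R}^p$, the Hankel matrix of depth $k$ is the $pk\times(N-k+1)$ matrix whose $(i,j)$ block is $\sigma(i+j)$; $\sigma$ is persistently exciting of order $k$ if $H_k(\sigma)$ has full (row) rank. $H_1(\tilde x)$ is the first $n$ rows of $H_{T+1}(\tilde x)$. $\Gamma(\tilde x)=\{G\in\mathbb{R}^{(L-T)\times n}: H_1(\tilde x)G=I_n,\ \mathbf{1}_{L-T}^\top G=\mathbf{1}_n^\top\}$, $\Lambda(\tilde x)=\{\hat g\in\mathbb{R}^{L-T}: H_1(\tilde x)\hat g=\mathbf{0}_n,\ \mathbf{1}_{L-T}^\top\hat g=1\}$. *)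

(* Defs.v *)
From HB Require Import structures.
From mathcomp Require Import all_boot all_order all_algebra.
Unset Printing Implicit Defensive.
Import Order.TTheory GRing.Theory Num.Theory.
Local Open Scope ring_scope.

Section Defs.
Variable R : rcfType.

(* total nat-indexed entry access (0 outside the range) *)
Definition mget (a b : nat) (M : 'M[R]_(a, b)) (i j : nat) : R :=
  match @insub _ (fun k => k < a)%N ('I_a) i, @insub _ (fun k => k < b)%N ('I_b) j with
  | Some i', Some j' => M i' j'
  | _, _ => 0
  end.
Definition vget (k : nat) (v : 'cV[R]_k) (r : nat) : R := mget k 1 v r 0.

Definition lev (k : nat) (u v : 'cV[R]_k) : Prop := forall i, u i 0 <= v i 0.

(* Hankel matrix of depth k of a signal sig(0:N-1) with values in R^p:
   the (pk) x (N-k+1) matrix whose (i,j) block is sig(i+j). *)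
Definition hankel (p k N : nat) (sig : nat -> 'cV[R]_p) : 'M[R]_(k * p, N - k + 1) :=
  \matrix_(r, c) vget p (sig (r %/ p + c)%N) (r %% p).

Definition pers_exc (p k N : nat) (sig : nat -> 'cV[R]_p) : bool :=
  row_free (hankel p k N sig).

Definition ctrb_mx (n m : nat) (A : 'M[R]_n) (B : 'M[R]_(n, m)) : 'M[R]_(n, n * m) :=
  \matrix_(i, j) mget n m (A ^+ (j %/ m) *m B) i (j %% m).
Definition controllable (n m : nat) (A : 'M[R]_n) (B : 'M[R]_(n, m)) : Prop :=
  \rank (ctrb_mx n m A B) = n.

Definition blk (T n : nat) (v : 'cV[R]_(T.+1 * n)) (t : nat) : 'cV[R]_n :=
  \col_i vget (T.+1 * n) v (t * n + i)%N.

Definition bdiag (T a b : nat) (M : 'M[R]_(a, b)) : 'M[R]_(T.+1 * a, T.+1 * b) :=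
  \matrix_(r, c) (if (r %/ a == c %/ b)%N then mget a b M (r %% a) (c %% b) else 0).
Definition bstack (T a : nat) (h : 'cV[R]_a) : 'cV[R]_(T.+1 * a) :=
  \col_r vget a h (r %% a).

Inductive pnorm_kind := P1 | P2 | Pinf.
Definition pnorm (p : pnorm_kind) (k : nat) (v : 'cV[R]_k) : R :=
  match p with
  | P1 => \sum_i `|v i 0|
  | P2 => Num.sqrt (\sum_i (v i 0) ^+ 2)
  | Pinf => \big[Num.max/0]_i `|v i 0|
  end.

Definition psd (k : nat) (M : 'M[R]_k) : Prop := forall v : 'cV[R]_k, 0 <= (v^T *m M *m v) 0 0.
Definition pd (k : nat) (M : 'M[R]_k) : Prop :=
  forall v : 'cV[R]_k, v != 0 -> 0 < (v^T *m M *m v) 0 0.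
Definition weights_ok (p : pnorm_kind) (n m : nat)
  (Q : 'M[R]_n) (Rw : 'M[R]_m) (P : 'M[R]_n) : Prop :=
  match p with
  | P2 => [/\ Q^T = Q /\ psd n Q, Rw^T = Rw /\ pd m Rw & P^T = P /\ psd n P]
  | _ => [/\ \rank Q = n, \rank Rw = m & \rank P = n]
  end.

Definition cost (p : pnorm_kind) (n m T : nat) (Q : 'M[R]_n) (Rw : 'M[R]_m) (P : 'M[R]_n)
  (xs : 'cV[R]_(T.+1 * n)) (us : 'cV[R]_(T.+1 * m)) : R :=
  pnorm p n (P *m blk T n xs T) +
  \sum_(t < T) (pnorm p n (Q *m blk T n xs t) + pnorm p m (Rw *m blk T m us t)).

(* H_1(x~): first n rows of H_{T+1}(x~) *)
Definition hankel1 (n T L : nat) (xd : nat -> 'cV[R]_n) : 'M[R]_(n, L - T.+1 + 1) :=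
  \matrix_(i, c) vget n (xd c) i.

Definition Gamma_set (n T L : nat) (xd : nat -> 'cV[R]_n) (G : 'M[R]_(L - T.+1 + 1, n)) : Prop :=
  hankel1 n T L xd *m G = 1%:M /\ (const_mx 1 : 'rV[R]_(L - T.+1 + 1)) *m G = const_mx 1.
Definition Lambda_set (n T L : nat) (xd : nat -> 'cV[R]_n) (g : 'cV[R]_(L - T.+1 + 1)) : Prop :=
  hankel1 n T L xd *m g = 0 /\ (const_mx 1 : 'rV[R]_(L - T.+1 + 1)) *m g = 1.

(* feasibility for the data-driven problem (P3), in the (x,u) components *)
Definition feasP3 (n m d q T L : nat) (xd : nat -> 'cV[R]_n) (ud : nat -> 'cV[R]_m)
  (Hx : 'M[R]_(d, n)) (Hu : 'M[R]_(d, m)) (h : 'cV[R]_d)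
  (F : 'M[R]_(q, n)) (f : 'cV[R]_q) (xinit : 'cV[R]_n)
  (xs : 'cV[R]_(T.+1 * n)) (us : 'cV[R]_(T.+1 * m)) : Prop :=
  exists (G : 'M[R]_(L - T.+1 + 1, n)) (g : 'cV[R]_(L - T.+1 + 1)),
    [/\ col_mx xs us =
          col_mx (hankel n T.+1 L xd) (hankel m T.+1 L ud)
            *m row_mx (G - g *m const_mx 1) g *m col_mx (blk T n xs 0) (const_mx 1),
        Gamma_set n T L xd G /\ Lambda_set n T L xd g,
        lev (T.+1 * d) (bdiag T d n Hx *m xs + bdiag T d m Hu *m us) (bstack T d h),
        blk T n xs 0 = xinit & lev q (F *m blk T n xs T) f].

Definition feasMPC (n m d q T : nat) (A : 'M[R]_n) (B : 'M[R]_(n, m)) (s : 'cV[R]_n)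
  (Hx : 'M[R]_(d, n)) (Hu : 'M[R]_(d, m)) (h : 'cV[R]_d)
  (F : 'M[R]_(q, n)) (f : 'cV[R]_q) (xinit : 'cV[R]_n)
  (xs : 'cV[R]_(T.+1 * n)) (us : 'cV[R]_(T.+1 * m)) : Prop :=
  [/\ forall t : nat, (t < T)%N -> blk T n xs t.+1 = A *m blk T n xs t + B *m blk T m us t + s,
      forall t : nat, (t <= T)%N -> lev d (Hx *m blk T n xs t + Hu *m blk T m us t) h,
      blk T n xs 0 = xinit & lev q (F *m blk T n xs T) f].

Definition optimal (a b : nat) (feas : 'cV[R]_a -> 'cV[R]_b -> Prop)
  (J : 'cV[R]_a -> 'cV[R]_b -> R) (xs : 'cV[R]_a) (us : 'cV[R]_b) : Prop :=
  feas xs us /\ forall xs' us', feas xs' us' -> J xs us <= J xs' us'.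

End Defs.

Arguments mget {R a b} M i j.
Arguments vget {R k} v r.
Arguments lev {R k} u v.
Arguments hankel {R p} k N sig.
Arguments pers_exc {R p} k N sig.
Arguments ctrb_mx {R n m} A B.
Arguments controllable {R n m} A B.
Arguments blk {R} T n v t.
Arguments bdiag {R} T {a b} M.
Arguments bstack {R} T {a} h.
Arguments pnorm {R} p {k} v.
Arguments psd {R k} M.
Arguments pd {R k} M.
Arguments weights_ok {R} p {n m} Q Rw P.
Arguments cost {R} p {n m} T Q Rw P xs us.
Arguments hankel1 {R n} T L xd.
Arguments Gamma_set {R n} T L xd G.
Arguments Lambda_set {R n} T L xd g.
Arguments feasP3 {R n m d q} T L xd ud Hx Hu h F f xinit xs us.
Arguments feasMPC {R n m d q} T A B s Hx Hu h F f xinit xs us.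
Arguments optimal {R a b} feas J xs us.

(* Main.v *)
Require Import Defs.
From HB Require Import structures.
From mathcomp Require Import all_boot all_order all_algebra.
From mathcomp Require Import zify ring lra.
Import Order.TTheory GRing.Theory Num.Theory.
Local Open Scope ring_scope.

Lemma mgetE (R : rcfType) a b (M : 'M[R]_(a, b)) (i : 'I_a) (j : 'I_b) :
  mget M i j = M i j.
Proof.
rewrite /mget (insubT (fun k => k < a)%N (ltn_ord i)) (insubT (fun k => k < b)%N (ltn_ord j)).
by congr (M _ _); apply: val_inj.
Qed.

Lemma mget_ord (R : rcfType) a b (M : 'M[R]_(a, b)) (i j : nat) (Hi : (i < a)%N) (Hj : (j < b)%N) :
  mget M i j = M (Ordinal Hi) (Ordinal Hj).
Proof. by rewrite -mgetE. Qed.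

Lemma mget_outl (R : rcfType) a b (M : 'M[R]_(a, b)) (i j : nat) : (a <= i)%N -> mget M i j = 0.
Proof. by move=> H; rewrite /mget insubF // ltnNge H. Qed.

Lemma vget_ord (R : rcfType) k (v : 'cV[R]_k) (r : nat) (Hr : (r < k)%N) :
  vget v r = v (Ordinal Hr) 0.
Proof. by rewrite /vget (@mget_ord _ _ _ v r 0 Hr (ltn0Sn 0)); congr (v _ _); apply: val_inj. Qed.

Lemma vgetE (R : rcfType) k (v : 'cV[R]_k) (r : 'I_k) : vget v r = v r 0.
Proof. by rewrite (@vget_ord _ _ v r (ltn_ord r)); congr (v _ _); apply: val_inj. Qed.

Lemma sum_mul_split (R : rcfType) k m (F : nat -> R) :
  \sum_(r < k * m) F r = \sum_(i < k) \sum_(a < m) F (i * m + a)%N.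
Proof.
elim: k => [|k IH]; first by rewrite mul0n !big_ord0.
rewrite big_ord_recr /= -IH mulSnr big_split_ord /=.
by congr (_ + _).
Qed.

Definition dot (R : rcfType) k (u v : 'cV[R]_k) : R := \sum_a u a 0 * v a 0.
Arguments dot {R k} u v.

Lemma dotDr (R : rcfType) k (u v w : 'cV[R]_k) : dot u (v + w) = dot u v + dot u w.
Proof. by rewrite /dot -big_split; apply: eq_bigr => a _; rewrite mxE mulrDr. Qed.

Lemma dotMr (R : rcfType) k l (u : 'cV[R]_k) (M : 'M[R]_(k, l)) (v : 'cV[R]_l) :
  dot u (M *m v) = dot (M^T *m u) v.
Proof.
rewrite /dot.
under eq_bigr do rewrite mxE big_distrr /=.
rewrite exchange_big /=; apply: eq_bigr => b _.
rewrite mxE big_distrl /=; apply: eq_bigr => a _.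
by rewrite mxE mulrCA mulrA.
Qed.

Lemma dot0l (R : rcfType) k (v : 'cV[R]_k) : dot 0 v = 0.
Proof. by rewrite /dot big1 // => a _; rewrite mxE mul0r. Qed.

Lemma dot_suml (R : rcfType) k N (a : 'I_N -> R) (u : 'I_N -> 'cV[R]_k) (v : 'cV[R]_k) :
  dot (\sum_i a i *: u i) v = \sum_i a i * dot (u i) v.
Proof.
rewrite /dot.
under eq_bigr do rewrite summxE big_distrl /=.
rewrite exchange_big /=; apply: eq_bigr => i _.
rewrite big_distrr /=; apply: eq_bigr => b _.
by rewrite mxE mulrA.
Qed.

Definition relD (R : rcfType) n m (xd : nat -> 'cV[R]_n) (ud : nat -> 'cV[R]_m)
  (D J : nat) (z : 'cV[R]_n) (th : nat -> 'cV[R]_m) (c : R) : Prop :=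
  forall j, (j < J)%N -> dot z (xd j) + \sum_(i < D) dot (th i) (ud (j + i)%N) + c = 0.
Arguments relD {R n m} xd ud D J z th c.

Lemma relD_mono (R : rcfType) n m xd ud D J J' z th c :
  (J' <= J)%N -> @relD R n m xd ud D J z th c -> relD xd ud D J' z th c.
Proof. by move=> HJ H j Hj; apply: H; apply: leq_trans HJ. Qed.
Arguments relD_mono {R n m xd ud D J J' z th c}.

Lemma relD_ext (R : rcfType) n m xd ud D J z th th' c :
  (forall l, th l = th' l) -> @relD R n m xd ud D J z th c -> relD xd ud D J z th' c.
Proof.
move=> E H j Hj; apply: etrans (H j Hj).
by rewrite (eq_bigr (fun i : 'I_D => dot (th i) (ud (j + i)%N))) // => i _; rewrite E.
Qed.

Lemma relD_shift (R : rcfType) n m L (A : 'M[R]_n) (B : 'M[R]_(n, m)) s xd ud D J z th c :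
  (forall t : nat, (t.+1 < L)%N -> xd t.+1 = A *m xd t + B *m ud t + s) ->
  (J.+1 <= L)%N -> (0 < D)%N -> th D.-1 = 0 ->
  @relD R n m xd ud D J.+1 z th c ->
  relD xd ud D J (A^T *m z) (fun l => if l is l'.+1 then th l' else B^T *m z) (c + dot z s).
Proof.
move=> Hdyn HJ HD Hth H j Hj.
have := H j.+1 Hj.
rewrite Hdyn; last by apply: leq_trans HJ.
rewrite !dotDr !dotMr.
case: D HD Hth {H} => // D _ /= Hth H1.
rewrite big_ord_recl /= addn0.
rewrite big_ord_recr /= Hth dot0l addr0 in H1.
have E : \sum_(i < D) dot (th i) (ud (j.+1 + i)%N) =
          \sum_(i < D) dot (th i) (ud (j + bump 0 i)%N).
  by apply: eq_bigr => i _; rewrite addSn addnS.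
rewrite E in H1; apply: etrans H1; ring.
Qed.
Arguments relD_shift {R n m L A B s xd ud D J z th c}.

Lemma relD_comb (R : rcfType) n m xd ud D J k (a : 'I_k -> R) z th c :
  (forall i, @relD R n m xd ud D J (z i) (th i) (c i)) ->
  relD xd ud D J (\sum_i a i *: z i) (fun l => \sum_i a i *: th i l) (\sum_i a i * c i).
Proof.
move=> H j Hj.
have E : forall i, a i * (dot (z i) (xd j) + \sum_(l < D) dot (th i l) (ud (j + l)%N) + c i) = 0.
  by move=> i; rewrite (H i j Hj) mulr0.
have -> : \sum_(l < D) dot (\sum_i a i *: th i l) (ud (j + l)%N) =
   \sum_(l < D) \sum_i a i * dot (th i l) (ud (j + l)%N).
  by apply: eq_bigr => l _; exact: (@dot_suml _ _ _ a (fun i => th i l)).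
rewrite (@dot_suml R n k a z (xd j)).
rewrite exchange_big /= -!big_split /= big1 // => i _.
have := E i; rewrite !mulrDr.
by rewrite [X in _ + X + _ = _ -> _]big_distrr.
Qed.
Arguments relD_comb {R n m xd ud D J k} a {z th c}.

Lemma divmod_aux (i m a : nat) : (a < m)%N -> ((i * m + a) %/ m = i /\ (i * m + a) %% m = a)%N.
Proof.
move=> Ha; have Hm : (0 < m)%N by apply: leq_ltn_trans Ha.
by rewrite divnMDl // divn_small // addn0 modnMDl modn_small.
Qed.

Lemma dotBl (R : rcfType) k (u v w : 'cV[R]_k) : dot (u - v) w = dot u w - dot v w.
Proof. by rewrite /dot -sumrB; apply: eq_bigr => a _; rewrite !mxE mulrBl. Qed.

Lemma PE_fact (R : rcfType) m K L (ud : nat -> 'cV[R]_m) (th : nat -> 'cV[R]_m) :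
  pers_exc K L ud ->
  (forall j, (j < L - K + 1)%N -> \sum_(i < K) dot (th i) (ud (j + i)%N) = 0) ->
  forall i, (i < K)%N -> th i = 0.
Proof.
move=> HPE H.
pose w : 'rV[R]_(K * m) := \row_r vget (th (r %/ m)%N) (r %% m)%N.
have Hw : w *m hankel K L ud = 0.
  apply/matrixP => a c; rewrite !mxE.
  under eq_bigr => r _ do rewrite /w !mxE.
  apply: etrans; first exact: (@sum_mul_split R K m (fun r => vget (th (r %/ m)%N) (r %% m)%N *
                     vget (ud (r %/ m + c)%N) (r %% m)%N)).
  apply: etrans (H c (ltn_ord c)); apply: eq_bigr => i _.
  rewrite /dot; apply: eq_bigr => b _.
  have [-> ->] := divmod_aux i m b (ltn_ord b).
  by rewrite !vgetE addnC.
have w0 : w = 0 by apply: (row_free_inj HPE); rewrite Hw mul0mx.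
move=> i Hi; apply/matrixP => a b; rewrite (ord1 b) mxE.
have Hr : (i * m + a < K * m)%N.
  apply: (@leq_trans (i.+1 * m)); first by rewrite mulSnr ltn_add2l.
  by rewrite leq_mul2r Hi orbT.
have := congr1 (fun M : 'rV[R]_(K * m) => M 0 (Ordinal Hr)) w0.
rewrite !mxE /=; have [-> ->] := divmod_aux i m a (ltn_ord a).
by rewrite vgetE.
Qed.

Lemma F1 (R : rcfType) n m L (xd : nat -> 'cV[R]_n) (ud : nat -> 'cV[R]_m) D th c :
  pers_exc D.+1 L ud -> (D.+1 <= L)%N ->
  relD xd ud D (L - D).+1 0 th c ->
  (forall i, (i < D)%N -> th i = 0) /\ c = 0.
Proof.
move=> HPE HL H.
pose th' (l : nat) : 'cV[R]_m := (if l is l'.+1 then th l' else 0) - (if (l < D)%N then th l else 0).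
have H' : forall i, (i < D.+1)%N -> th' i = 0.
  apply: (@PE_fact R m D.+1 L ud th' HPE) => j Hj.
  have Hj1 : (j.+1 < (L - D).+1)%N by rewrite ltnS; rewrite subnS addn1 in Hj; lia.
  have Hj0 : (j < (L - D).+1)%N by apply: ltnW.
  have E1 := H j.+1 Hj1; have E0 := H j Hj0.
  rewrite dot0l add0r in E1; rewrite dot0l add0r in E0.
  rewrite /th'.
  under eq_bigr do rewrite dotBl.
  rewrite sumrB big_ord_recl big_ord_recr /= dot0l add0r ltnn dot0l addr0.
  have -> : \sum_(i < D) dot (th i) (ud (j + bump 0 i)%N) = \sum_(i < D) dot (th i) (ud (j.+1 + i)%N).
    by apply: eq_bigr => i _; rewrite addSn addnS.
  have -> : \sum_(i < D) dot (if (widen_ord (leqnSn D) i < D)%N then th (widen_ord (leqnSn D) i) else 0) (ud (j + widen_ord (leqnSn D) i)%N) = \sum_(i < D) dot (th i) (ud (j + i)%N).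
    by apply: eq_bigr => i _; rewrite /= ltn_ord.
  have -> : \sum_(i < D) dot (th i) (ud (j.+1 + i)%N) = - c by apply/eqP; rewrite -addr_eq0 E1.
  have -> : \sum_(i < D) dot (th i) (ud (j + i)%N) = - c by apply/eqP; rewrite -addr_eq0 E0.
  by rewrite subrr.
have Hth : forall i, (i < D)%N -> th i = 0.
  elim=> [|i IH] Hi.
    have := H' 0%N (ltn0Sn _); rewrite /th' Hi sub0r => /eqP; rewrite oppr_eq0 => /eqP //.
  have := H' i.+1 (leqW Hi); rewrite /th' Hi IH ?sub0r; last by apply: ltnW.
  by move=> /eqP; rewrite oppr_eq0 => /eqP.
split => //.
have := H 0%N (ltn0Sn _); rewrite dot0l add0r big1 ?add0r // => i _.
by rewrite Hth // dot0l.
Qed.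
Arguments F1 {R n m L xd ud D th c}.

Lemma trmxX (R : rcfType) n (A : 'M[R]_n) e : (A ^+ e)^T = A^T ^+ e.
Proof.
elim: e => [|e IH]; first by rewrite !expr0 trmx1.
by rewrite exprS exprSr trmx_mul IH.
Qed.

Lemma CH_vec (R : rcfType) n (A : 'M[R]_n) (x : 'cV[R]_n) :
  \sum_(i < n.+1) (char_poly A)`_i *: (A ^+ i *m x) = 0.
Proof.
case: n A x => [|n] A x.
  by rewrite (flatmx0 x) big1 // => i _; rewrite mulmx0 scaler0.
have := Cayley_Hamilton A.
rewrite /horner_mx /horner_morph horner_coef size_map_poly size_char_poly => HC.
under eq_bigr do rewrite scalemxAl.
rewrite -mulmx_suml.
suff -> : \sum_(i < n.+2) (char_poly A)`_i *: A ^+ i = 0 by rewrite mul0mx.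
apply: (etrans _ HC); apply: eq_bigr => i _.
rewrite coef_map /=; exact: (esym (mul_scalar_mx _ _)).
Qed.

Lemma char_poly_lead (R : rcfType) n (A : 'M[R]_n) : (char_poly A)`_n = 1.
Proof.
by have /monicP := char_poly_monic A; rewrite /lead_coef size_char_poly.
Qed.

Lemma relD_pad (R : rcfType) n m xd ud K D J z th c :
  (forall l, (K <= l)%N -> th l = 0) -> (K <= D)%N ->
  @relD R n m xd ud K J z th c -> relD xd ud D J z th c.
Proof.
move=> Hth HKD H j Hj; apply: etrans (H j Hj).
have -> : \sum_(i < D) dot (th i) (ud (j + i)%N) = \sum_(i < K) dot (th i) (ud (j + i)%N) => //.
rewrite (big_ord_widen D (fun i => dot (th i) (ud (j + i)%N)) HKD) [RHS]big_mkcond /=.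
apply: eq_bigr => i _; case: ifP => // /negbT; rewrite -leqNgt => Hi.
by rewrite Hth // dot0l.
Qed.

Lemma relD_iter (R : rcfType) n m L (A : 'M[R]_n) (B : 'M[R]_(n, m)) s xd ud K J
  (x : 'cV[R]_n) (eta : nat -> 'cV[R]_m) c :
  (forall t : nat, (t.+1 < L)%N -> xd t.+1 = A *m xd t + B *m ud t + s) ->
  (forall l, (K <= l)%N -> eta l = 0) -> (0 < K)%N -> (n < J)%N -> (J <= L)%N ->
  relD xd ud (n + K) J x eta c ->
  forall i, (i <= n)%N ->
  relD xd ud (n + K) (J - i) (A^T ^+ i *m x)
    (fun l => if (l < i)%N then B^T *m (A^T ^+ (i - l.+1) *m x) else eta (l - i)%N)
    (c + \sum_(l < i) dot (A^T ^+ l *m x) s).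
Proof.
move=> Hdyn Heta HK HnJ HJL H0.
elim=> [|i IH] Hi.
  rewrite subn0 big_ord0 addr0 expr0 mul1mx.
  by apply: relD_ext H0 => l; rewrite ltn0 subn0.
have Hi' : (i <= n)%N by apply: ltnW.
have HJi : (J - i = (J - i.+1).+1)%N by lia.
have := IH Hi'; rewrite HJi => H1.
have HL1 : ((J - i.+1).+1 <= L)%N by lia.
have HD : (0 < n + K)%N by lia.
have Hth : (if ((n + K).-1 < i)%N then B^T *m (A^T ^+ (i - (n + K).-1.+1) *m x) else eta ((n + K).-1 - i)%N) = 0.
  have -> : ((n + K).-1 < i)%N = false by apply/negbTE; rewrite -leqNgt; lia.
  by apply: Heta; lia.
have H2 := relD_shift Hdyn HL1 HD Hth H1.
have -> : A^T ^+ i.+1 *m x = A^T *m (A^T ^+ i *m x) by rewrite exprS mulmxA.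
rewrite big_ord_recr /= addrA.
apply: relD_ext H2 => -[|l] /=.
  by rewrite subn1.
by rewrite ltnS subSS.
Qed.
Arguments relD_iter {R n m L A B s xd ud K J x eta c}.

Lemma ctrb_zero (R : rcfType) n m (A : 'M[R]_n) (B : 'M[R]_(n, m)) (x : 'cV[R]_n) :
  controllable A B -> (forall k, (k < n)%N -> B^T *m (A^T ^+ k *m x) = 0) -> x = 0.
Proof.
move=> HC Hk.
have HF : row_free (ctrb_mx A B) by rewrite /row_free HC.
suff : x^T = 0 by move=> /(congr1 trmx); rewrite trmxK trmx0.
apply: (row_free_inj HF); rewrite mul0mx.
apply/matrixP => a j; rewrite !mxE.
have : (0 < n * m)%N by apply: leq_ltn_trans (ltn_ord j).
rewrite muln_gt0 => /andP [Hn Hm].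
have Hjm := ltn_pmod j Hm.
have Hjn : (j %/ m < n)%N by rewrite ltn_divLR.
have E := Hk _ Hjn.
have := congr1 (fun M : 'cV[R]_m => M (Ordinal Hjm) 0) E.
rewrite -trmxX mulmxA -trmx_mul !mxE => E'.
under eq_bigr do rewrite !mxE.
apply: etrans E'; apply: eq_bigr => i _.
rewrite (ord1 a) (@mget_ord R n m _ i (j %% m)%N (ltn_ord i) Hjm) !mxE mulrC.
have -> : Ordinal (ltn_ord i) = i by apply: val_inj.
done.
Qed.

Lemma kernel_zero (R : rcfType) n m L (A : 'M[R]_n) (B : 'M[R]_(n, m)) s xd ud K
  (x : 'cV[R]_n) (eta : nat -> 'cV[R]_m) c :
  (forall t : nat, (t.+1 < L)%N -> xd t.+1 = A *m xd t + B *m ud t + s) ->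
  controllable A B -> (n + K + 1 <= L)%N -> pers_exc (n + K + 1) L ud -> (0 < K)%N ->
  (forall l, (K <= l)%N -> eta l = 0) ->
  relD xd ud K (L - K + 1) x eta c ->
  x = 0 /\ (forall l, eta l = 0) /\ c = 0.
Proof.
move=> Hdyn HC HL HPE HK Heta H.
have H0 : relD xd ud (n + K) (L - K + 1) x eta c by apply: relD_pad H => //; apply: leq_addl.
have Hit := relD_iter Hdyn Heta HK (ltac:(lia) : (n < L - K + 1)%N) (ltac:(lia) : (L - K + 1 <= L)%N) H0.
have Hall : forall i : 'I_n.+1, relD xd ud (n + K) (L - K + 1 - n)
    (A^T ^+ i *m x)
    (fun l => if (l < i)%N then B^T *m (A^T ^+ (i - l.+1) *m x) else eta (l - i)%N)
    (c + \sum_(l < i) dot (A^T ^+ l *m x) s).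
  move=> i; have Hi := ltn_ord i; apply: relD_mono (Hit i _); first lia.
  by rewrite -ltnS.
have Hc := relD_comb (fun i : 'I_n.+1 => (char_poly A^T)`_i) Hall.
rewrite CH_vec in Hc.
have E : (L - K + 1 - n)%N = (L - (n + K)).+1 by lia.
rewrite E in Hc.
rewrite addn1 in HPE.
have [HT _] := F1 HPE (ltac:(lia) : ((n + K).+1 <= L)%N) Hc.
have Hlead := @char_poly_lead R n A^T.
have Heta0 : forall e k, (K - k <= e)%N -> eta k = 0.
  elim=> [|e IHe] k Hk; first by apply: Heta; lia.
  case: (leqP K k) => HKk; first exact: Heta.
  have := HT (n + k)%N (ltac:(lia)); rewrite /= big_ord_recr /=.
  rewrite ltnNge leq_addr /= addKn Hlead scale1r big1 ?add0r // => i _.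
  have Hi := ltn_ord i.
  have -> : (n + k < i)%N = false by apply/negbTE; rewrite -leqNgt; lia.
  by rewrite (IHe _ (ltac:(lia) : (K - (n + k - i) <= e)%N)) scaler0.
have Heta1 : forall l, eta l = 0 by move=> l; apply: (Heta0 K); lia.
have step : forall k, (k < n)%N -> (forall k', (k' < k)%N -> B^T *m (A^T ^+ k' *m x) = 0) ->
    B^T *m (A^T ^+ k *m x) = 0.
  move=> k Hkn IH.
  have := HT (n - k.+1)%N (ltac:(lia)); rewrite /= big_ord_recr /=.
  have -> : (n - k.+1 < n)%N by lia.
  have -> : (n - (n - k.+1).+1 = k)%N by lia.
  rewrite Hlead scale1r big1 ?add0r // => i _.
  have Hi := ltn_ord i.
  case: ifP => Hl; last by rewrite Heta1 scaler0.
  by rewrite IH ?scaler0 //; lia.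
have Hx : x = 0.
  apply: (@ctrb_zero R n m A B x HC).
  have : forall e k, (k <= e)%N -> (k < n)%N -> B^T *m (A^T ^+ k *m x) = 0.
    elim=> [|e IHe] k Hk Hkn.
      by apply: step => // k'; lia.
    by apply: step => // k' Hk'; apply: IHe; lia.
  by move=> Hall' k Hk; apply: (Hall' k).
split => //; split => //.
have := H 0%N (ltac:(lia)); rewrite Hx dot0l add0r big1 ?add0r // => i _.
by rewrite Heta1 dot0l.
Qed.

Lemma idx_lt (t k a p : nat) : (t < k)%N -> (a < p)%N -> (t * p + a < k * p)%N.
Proof.
move=> Ht Ha; apply: (@leq_trans (t.+1 * p)); first by rewrite mulSnr ltn_add2l.
by rewrite leq_mul2r Ht orbT.
Qed.
Arguments idx_lt {t k a p}.

Lemma hankel1_mul (R : rcfType) n T L (xd : nat -> 'cV[R]_n) (al : 'cV[R]_(L - T.+1 + 1)) :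
  hankel1 T L xd *m al = \sum_j al j 0 *: xd j.
Proof.
apply/matrixP => a b; rewrite (ord1 b) !mxE summxE.
by apply: eq_bigr => j _; rewrite !mxE vgetE mulrC.
Qed.

Lemma blk_hankel_mul (R : rcfType) p T L (sig : nat -> 'cV[R]_p) (al : 'cV[R]_(L - T.+1 + 1)) t :
  (t <= T)%N -> blk T p (hankel T.+1 L sig *m al) t = \sum_j al j 0 *: sig (t + j)%N.
Proof.
move=> Ht; apply/matrixP => a b; rewrite (ord1 b) !mxE summxE.
rewrite (@vget_ord R _ _ _ (idx_lt (Ht : (t < T.+1)%N) (ltn_ord a))) !mxE.
apply: eq_bigr => j _; rewrite !mxE /=.
have [-> ->] := divmod_aux t p a (ltn_ord a).
by rewrite vgetE mulrC.
Qed.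

Lemma blk_ext (R : rcfType) T n (v w : 'cV[R]_(T.+1 * n)) :
  (forall t, (t <= T)%N -> blk T n v t = blk T n w t) -> v = w.
Proof.
move=> H; apply/matrixP => r b; rewrite (ord1 b).
have Hn : (0 < n)%N.
  by case: n {H v w} r => // r; rewrite muln0 in r; case: r.
have Hr := ltn_ord r.
have Ht : (r %/ n <= T)%N by rewrite -ltnS ltn_divLR.
have Ha := ltn_pmod r Hn.
have := congr1 (fun M : 'cV[R]_n => M (Ordinal Ha) 0) (H _ Ht).
rewrite !mxE -divn_eq !(@vget_ord R _ _ _ Hr).
by have -> : Ordinal Hr = r by apply: val_inj.
Qed.

Lemma ones_mul (R : rcfType) N (al : 'cV[R]_N) :
  ((const_mx 1 : 'rV[R]_N) *m al) 0 0 = \sum_j al j 0.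
Proof. by rewrite mxE; apply: eq_bigr => j _; rewrite mxE mul1r. Qed.

Lemma traj_step (R : rcfType) n m T L (A : 'M[R]_n) (B : 'M[R]_(n, m)) s xd ud
   (al : 'cV[R]_(L - T.+1 + 1)) t :
  (forall t : nat, (t.+1 < L)%N -> xd t.+1 = A *m xd t + B *m ud t + s) ->
  (T.+1 <= L)%N -> \sum_j al j 0 = 1 -> (t < T)%N ->
  blk T n (hankel T.+1 L xd *m al) t.+1 =
  A *m blk T n (hankel T.+1 L xd *m al) t + B *m blk T m (hankel T.+1 L ud *m al) t + s.
Proof.
move=> Hdyn HL Hal Ht.
rewrite !blk_hankel_mul //; try by apply: ltnW.
rewrite !mulmx_sumr -[s]scale1r -Hal scaler_suml -!big_split /=.
apply: eq_bigr => j _.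
have Hj := ltn_ord j.
rewrite addSn Hdyn; last by lia.
by rewrite !scalerDr -!scalemxAr.
Qed.

Lemma bdiag_entry (R : rcfType) T a b (M : 'M[R]_(a, b)) (v : 'cV[R]_(T.+1 * b)) t e
  (Ht : (t <= T)%N) (He : (e < a)%N) (r : 'I_(T.+1 * a)) :
  val r = (t * a + e)%N -> (bdiag T M *m v) r 0 = (M *m blk T b v t) (Ordinal He) 0.
Proof.
move=> Hr; rewrite !mxE.
have [Hq Hm] := divmod_aux t a e He.
under eq_bigr do rewrite mxE Hr Hq Hm -vgetE.
apply: etrans; first exact: (@sum_mul_split R T.+1 b (fun c => (if (t == c %/ b)%N then mget M e (c %% b)%N else 0) * vget v c)).
have Ht' : (t < T.+1)%N by [].
rewrite (bigD1 (Ordinal Ht')) //= [X in _ + X]big1 ?addr0; last first.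
  move=> i /eqP Hi; apply: big1 => a' _.
  have [-> _] := divmod_aux i b a' (ltn_ord a').
  case: eqP => [Eti|]; last by rewrite mul0r.
  by exfalso; apply: Hi; apply: val_inj.
apply: eq_bigr => a' _.
have [-> ->] := divmod_aux t b a' (ltn_ord a').
rewrite eqxx !mxE (@mget_ord R a b M e a' He (ltn_ord a')).
by have -> : Ordinal (ltn_ord a') = a' by apply: val_inj.
Qed.

Arguments bdiag_entry {R T a b} M v {t e} Ht He {r}.

Lemma lev_bdiag_iff (R : rcfType) n m d T (Hx : 'M[R]_(d, n)) (Hu : 'M[R]_(d, m)) (h : 'cV[R]_d)
  (xs : 'cV[R]_(T.+1 * n)) (us : 'cV[R]_(T.+1 * m)) :
  lev (bdiag T Hx *m xs + bdiag T Hu *m us) (bstack T h) <->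
  (forall t, (t <= T)%N -> lev (Hx *m blk T n xs t + Hu *m blk T m us t) h).
Proof.
split.
  move=> H t Ht e.
  have Ht' : (t < T.+1)%N by [].
  pose r := Ordinal (idx_lt Ht' (ltn_ord e)).
  have := H r; rewrite [X in X <= _ -> _]mxE.
  rewrite (bdiag_entry Hx xs Ht (ltn_ord e) (erefl _ : val r = _)).
  rewrite (bdiag_entry Hu us Ht (ltn_ord e) (erefl _ : val r = _)).
  rewrite [X in _ <= X -> _]mxE /=.
  have [_ ->] := divmod_aux t d e (ltn_ord e).
  rewrite vgetE [X in _ -> X <= _]mxE.
  by have -> : Ordinal (ltn_ord e) = e by apply: val_inj.
move=> H r.
have Hd : (0 < d)%N.
  by case: d {H Hx Hu h} r => // r; rewrite muln0 in r; case: r.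
have Hr := ltn_ord r.
have Ht : (r %/ d <= T)%N by rewrite -ltnS ltn_divLR.
have He := ltn_pmod r Hd.
have Er : val r = (r %/ d * d + r %% d)%N by rewrite -divn_eq.
have := H _ Ht (Ordinal He); rewrite [X in X <= _ -> _]mxE.
rewrite [X in _ -> X <= _]mxE (bdiag_entry Hx xs Ht He Er) (bdiag_entry Hu us Ht He Er).
by rewrite [X in _ -> _ <= X]mxE (@vget_ord R _ _ _ He).
Qed.

Lemma mget_outr (R : rcfType) a b (M : 'M[R]_(a, b)) (i j : nat) : (b <= j)%N -> mget M i j = 0.
Proof. by move=> H; rewrite /mget; case: insub => // ?; rewrite insubF // ltnNge H. Qed.

Lemma Mbig_free (R : rcfType) n m T L (A : 'M[R]_n) (B : 'M[R]_(n, m)) s xd ud :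
  (forall t : nat, (t.+1 < L)%N -> xd t.+1 = A *m xd t + B *m ud t + s) ->
  controllable A B -> (n + T.+1 + 1 <= L)%N -> pers_exc (n + T.+1 + 1) L ud ->
  row_free (col_mx (col_mx (hankel1 T L xd) (hankel T.+1 L ud)) (const_mx 1 : 'rV[R]_(L - T.+1 + 1))).
Proof.
move=> Hdyn HC HL HPE.
apply: inj_row_free => w Hw.
rewrite -(hsubmxK w) -(hsubmxK (lsubmx w)) in Hw *.
set wx := lsubmx (lsubmx w); set wu := rsubmx (lsubmx w); set wc := rsubmx w.
move: Hw; rewrite !mul_row_col => Hw.
pose eta (i : nat) : 'cV[R]_m := \col_(a < m) mget wu 0 (i * m + a)%N.
have Heta : forall l, (T.+1 <= l)%N -> eta l = 0.
  move=> l Hl; apply/matrixP => a b; rewrite !mxE mget_outr //.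
  by apply: (@leq_trans (l * m)); [rewrite leq_mul2r Hl orbT | apply: leq_addr].
have Hrel : relD xd ud T.+1 (L - T.+1 + 1) wx^T eta (wc 0 0).
  move=> j Hj.
  have E := congr1 (fun M : 'rV[R]_(L - T.+1 + 1) => M 0 (Ordinal Hj)) Hw.
  have e1 : dot wx^T (xd j) = \sum_j0 wx 0 j0 * hankel1 T L xd j0 (Ordinal Hj).
    by apply: eq_bigr => i _; rewrite !mxE vgetE.
  have e3 : wc 0 0 = \sum_j0 wc 0 j0 * const_mx 1 j0 (Ordinal Hj).
    by rewrite big_ord1 [const_mx _ _ _]mxE mulr1.
  have e2 : \sum_(i < T.+1) dot (eta i) (ud (j + i)%N) = \sum_j0 wu 0 j0 * hankel T.+1 L ud j0 (Ordinal Hj).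
    under [RHS]eq_bigr => r _ do rewrite [hankel _ _ _ _ _]mxE -(@mgetE R _ _ wu).
    apply: esym; apply: etrans; first exact: (@sum_mul_split R T.+1 m (fun r => mget wu 0 r * vget (ud (r %/ m + j)%N) (r %% m)%N)).
    apply: eq_bigr => i _; apply: eq_bigr => a _.
    have [-> ->] := divmod_aux i m a (ltn_ord a).
    by rewrite !mxE vgetE (addnC i j).
  by rewrite e2 e3 e1; move: E; rewrite !mxE.
have [Hx [He Hc]] := @kernel_zero R n m L A B s xd ud T.+1 _ _ _ Hdyn HC HL HPE (ltn0Sn T) Heta Hrel.
have -> : wx = 0 by rewrite -[wx]trmxK Hx trmx0.
have -> : wc = 0 by apply/matrixP => a b; rewrite (ord1 a) (ord1 b) Hc mxE.
have -> : wu = 0.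
  apply/matrixP => a r; rewrite (ord1 a) mxE.
  have Hm : (0 < m)%N.
    have Hr := ltn_ord r; move: (val r) Hr => k; rewrite lt0n; apply: contraTneq => ->.
    by rewrite muln0.
  have Hrm := ltn_pmod r Hm.
  have := congr1 (fun M : 'cV[R]_m => M (Ordinal Hrm) 0) (He (r %/ m)%N).
  rewrite !mxE /= -divn_eq => <-.
  by rewrite (@mgetE R _ _ wu 0 r) !mxE.
by rewrite !row_mx0.
Qed.

Lemma const11 (R : rcfType) : (const_mx 1 : 'M[R]_(1, 1)) = 1%:M.
Proof. by apply/matrixP => a b; rewrite (ord1 a) (ord1 b) !mxE. Qed.

Lemma row_col_form (R : rcfType) N n (M : 'M[R]_(N, n)) (g : 'cV[R]_N) (x0 : 'cV[R]_n) :
  row_mx M g *m col_mx x0 (const_mx 1) = M *m x0 + g.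
Proof. by rewrite mul_row_col const11 mulmx1. Qed.

Lemma blk0_hankel (R : rcfType) n T L (xd : nat -> 'cV[R]_n) (al : 'cV[R]_(L - T.+1 + 1)) :
  blk T n (hankel T.+1 L xd *m al) 0 = hankel1 T L xd *m al.
Proof. by rewrite blk_hankel_mul // hankel1_mul. Qed.

Lemma P3_to_MPC (R : rcfType) n m d q T L (A : 'M[R]_n) (B : 'M[R]_(n, m)) s
  (Hx : 'M[R]_(d, n)) (Hu : 'M[R]_(d, m)) (h : 'cV[R]_d)
  (F : 'M[R]_(q, n)) (f : 'cV[R]_q) (xinit : 'cV[R]_n)
  (xd : nat -> 'cV[R]_n) (ud : nat -> 'cV[R]_m) xs us :
  (forall t : nat, (t.+1 < L)%N -> xd t.+1 = A *m xd t + B *m ud t + s) ->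
  (T.+1 <= L)%N ->
  feasP3 T L xd ud Hx Hu h F f xinit xs us -> feasMPC T A B s Hx Hu h F f xinit xs us.
Proof.
move=> Hdyn HL [G [g [Heq [[HG1 HG2] [Hg1 Hg2]] Hlev Hx0 HF]]].
rewrite -mulmxA row_col_form mul_col_mx in Heq.
set al := (G - g *m const_mx 1) *m blk T n xs 0 + g in Heq.
have [Exs Eus] := eq_col_mx Heq.
have Hal : \sum_j al j 0 = 1.
  rewrite -ones_mul /al mulmxDr Hg2 mulmxA mulmxBr HG2 mulmxA Hg2.
  rewrite [1 *m _]mul1mx subrr mul0mx add0r.
  by rewrite mxE.
split => //.
- by move=> t Ht; rewrite Exs Eus; apply: traj_step.
- by apply/lev_bdiag_iff.
Qed.

Lemma MPC_to_P3 (R : rcfType) n m d q T L (A : 'M[R]_n) (B : 'M[R]_(n, m)) s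
  (Hx : 'M[R]_(d, n)) (Hu : 'M[R]_(d, m)) (h : 'cV[R]_d)
  (F : 'M[R]_(q, n)) (f : 'cV[R]_q) (xinit : 'cV[R]_n)
  (xd : nat -> 'cV[R]_n) (ud : nat -> 'cV[R]_m) xs us :
  (forall t : nat, (t.+1 < L)%N -> xd t.+1 = A *m xd t + B *m ud t + s) ->
  controllable A B -> (n + T.+1 + 1 <= L)%N -> pers_exc (n + T.+1 + 1) L ud ->
  feasMPC T A B s Hx Hu h F f xinit xs us -> feasP3 T L xd ud Hx Hu h F f xinit xs us.
Proof.
move=> Hdyn HC HL HPE [Hdyn' Hcons Hx0 HF].
have [X HX] := row_freeP (@Mbig_free R n m T L A B s xd ud Hdyn HC HL HPE).
set H1 := hankel1 T L xd; set Hxm := hankel T.+1 L xd; set Hum := hankel T.+1 L ud.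
set one := (const_mx 1 : 'rV[R]_(L - T.+1 + 1)).
have solve : forall k (b1 : 'M[R]_(n, k)) (b2 : 'M[R]_(T.+1 * m, k)) (b3 : 'M[R]_(1, k)),
    exists Y, [/\ H1 *m Y = b1, Hum *m Y = b2 & one *m Y = b3].
  move=> k b1 b2 b3; exists (X *m col_mx (col_mx b1 b2) b3).
  have E := congr1 (mulmx^~ (col_mx (col_mx b1 b2) b3)) HX.
  rewrite /= -mulmxA mul1mx !mul_col_mx in E.
  have [E1 E3] := eq_col_mx E; have [E11 E12] := eq_col_mx E1.
  by split.
set x0 := blk T n xs 0.
have [al [Ha1 Ha2 Ha3]] := solve 1%N x0 us 1.
have [G0 [HG01 _ HG03]] := solve n 1%:M 0 (const_mx 1).
have [g0 [Hg01 _ Hg03]] := solve 1%N 0 0 1.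
set r1 := (const_mx 1 : 'rV[R]_n).
set g := al - (G0 - g0 *m r1) *m x0.
set G := G0 + (g - g0) *m r1.
have EGg : G - g *m r1 = G0 - g0 *m r1.
  by rewrite /G mulmxBl addrA addrAC addrK.
have Hg1 : H1 *m g = 0.
  by rewrite /g mulmxBr Ha1 mulmxA mulmxBr HG01 mulmxA Hg01 mul0mx subr0 mul1mx subrr.
have Hg2 : one *m g = 1.
  rewrite /g mulmxBr Ha3 mulmxA mulmxBr HG03 mulmxA Hg03.
  by rewrite [1 *m _]mul1mx subrr mul0mx subr0.
have HG1 : H1 *m G = 1%:M by rewrite /G mulmxDr mulmxA mulmxBr Hg1 Hg01 subrr mul0mx addr0.
have HG2 : one *m G = const_mx 1 by rewrite /G mulmxDr mulmxA mulmxBr Hg2 Hg03 subrr mul0mx addr0.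
have Eal : (G - g *m r1) *m x0 + g = al by rewrite EGg /g addrC subrK.
have Hsum : \sum_j al j 0 = 1 by rewrite -ones_mul Ha3 mxE.
have Exs : Hxm *m al = xs.
  apply: blk_ext => t; elim: t => [|t IH] Ht.
    by rewrite blk0_hankel Ha1.
  rewrite (@traj_step R n m T L A B s xd ud al t Hdyn (ltac:(lia)) Hsum Ht).
  by rewrite IH ?(ltnW Ht) // Ha2 Hdyn'.
exists G, g; split => //.
- by rewrite -mulmxA row_col_form Eal mul_col_mx Exs Ha2.
- by apply/lev_bdiag_iff.
Qed.

Theorem mainTheorem4 (R : rcfType) (n m d q T L : nat) (p : pnorm_kind)
  (A : 'M[R]_n) (B : 'M[R]_(n, m)) (s : 'cV[R]_n)
  (Q : 'M[R]_n) (Rw : 'M[R]_m) (P : 'M[R]_n)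
  (Hx : 'M[R]_(d, n)) (Hu : 'M[R]_(d, m)) (h : 'cV[R]_d)
  (F : 'M[R]_(q, n)) (f : 'cV[R]_q) (xinit : 'cV[R]_n)
  (xd : nat -> 'cV[R]_n) (ud : nat -> 'cV[R]_m)
  (xs : 'cV[R]_(T.+1 * n)) (us : 'cV[R]_(T.+1 * m)) :
  weights_ok p Q Rw P ->
  controllable A B ->
  (n + T.+1 + 1 <= L)%N ->
  (forall t : nat, (t.+1 < L)%N -> xd t.+1 = A *m xd t + B *m ud t + s) ->
  pers_exc (n + T.+1 + 1) L ud ->
  optimal (feasP3 T L xd ud Hx Hu h F f xinit) (cost p T Q Rw P) xs us <->
  optimal (feasMPC T A B s Hx Hu h F f xinit) (cost p T Q Rw P) xs us.
Proof.
move=> _ HC HL Hdyn HPE.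
have HL' : (T.+1 <= L)%N by lia.
have E : forall xs us, feasP3 T L xd ud Hx Hu h F f xinit xs us <->
                       feasMPC T A B s Hx Hu h F f xinit xs us.
  move=> xs0 us0; split.
    exact: (@P3_to_MPC R n m d q T L A B s Hx Hu h F f xinit xd ud xs0 us0 Hdyn HL').
  exact: (@MPC_to_P3 R n m d q T L A B s Hx Hu h F f xinit xd ud xs0 us0 Hdyn HC HL HPE).
split => -[Hf Hopt]; split.
- by apply/E.
- by move=> xs' us' /E H; apply: Hopt.
- by apply/E.
- by move=> xs' us' /E H; apply: Hopt.
Qed.
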